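(* Let $c\ge 1$ be an integer and $f(x_1,\dots,x_c)$ a multivariate polynomial with non-negative coefficients that is recursive-dependent and has a positive real fixed point $C$, i.e. $C=f(C,\dots,C)$ with $C>0$. Let $\mathcal{F}=\bigsqcup_{h\ge0}\mathcal{F}_h$ be a combinatorial class decomposed into finite subclasses whose generating functions $F_h(z)$ are non-constant polynomials with non-negative coefficients satisfying \[F_h(z)=f\bigl(F_{h-1}(z),F_{h-2}(z),\dots,F_{h-c}(z)\bigr)\quad\text{for all } h\ge c,\] and for each $h\ge0$ let $\alpha_h$ be the unique positive real solution of $F_h(z)=C$; the limit $\alpha=\lim_{h\to\infty}\alpha_h$ exists. Let $a_n$ be the number of objects of $\mathcal{F}$ of size $n$, i.e. the coefficient of $z^n$ in $F(z)=\sum_{h\ge0}F_h(z)$. Then \[a_n=\alpha^{-n}\,\theta(n)\] for a function $\theta$ growing at most sub-exponentially, i.e. $\theta(n)=o(\kappa^n)$ for every $\kappa>1$.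
   Context: The polynomial $f$ is called recursive-dependent if there is a constant $k$ (depending only on $f$) such that for any indices $i,j\ge c$ with $i\ge j+k$, there is a sequence of applications of the recurrence $F_h=f(F_{h-1},\dots,F_{h-c})$ (repeatedly substituting it for terms $F_h$ with $h\ge c$) resulting in a polynomial $P$ with $F_i=P(F_{\ell_1},\dots,F_{\ell_m})$ for some indices $0\le\ell_1<\dots<\ell_m\le i$ such that $\partial P/\partial F_j\neq 0$ (i.e. $F_j$ is among the $F_{\ell_r}$ and $P$ genuinely depends on it). *)

(* Defs.v *)
From HB Require Import structures.
From mathcomp Require Import all_boot all_order all_algebra.
From mathcomp Require Import reals.
From mathcomp Require Import mpoly.
Set Implicit Arguments. Unset Strict Implicit. Unset Printing Implicit Defensive.
Import Order.TTheory GRing.Theory Num.Theory.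
Local Open Scope ring_scope.

Section Defs.
Variable R : realType.

(* The substitution "F_h := f(F_{h-1},...,F_{h-c})" acting on polynomials in
   the formal variables F_0,...,F_i (variable k : 'I_i.+1 stands for F_k);
   variable x_{j+1} of f (index j : 'I_c) is replaced by F_{h-(j+1)}. *)
Definition rec_subst (c i : nat) (f : {mpoly R[c]}) (h : 'I_i.+1)
  : i.+1.-tuple {mpoly R[i.+1]} :=
  [tuple (if k == h then f \mPo [tuple 'X_(inord (h - j.+1)) | j < c]
          else 'X_k) | k < i.+1].

Definition rec_unfold (c i : nat) (f : {mpoly R[c]}) (s : seq 'I_i.+1)
  : {mpoly R[i.+1]} :=
  foldl (fun P h => P \mPo rec_subst f h) 'X_(@ord_max i) s.

Definition recursive_dependent (c : nat) (f : {mpoly R[c]}) : Prop :=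
  exists k : nat, forall i j : nat, (c <= j)%N -> (j + k <= i)%N ->
    exists s : seq 'I_i.+1, all (fun h : 'I_i.+1 => (c <= h)%N) s /\
      (rec_unfold f s)^`M(inord j) != 0.

Definition mpoly_at_polys (c : nat) (f : {mpoly R[c]}) (G : 'I_c -> {poly R})
  : {poly R} := mmap (@polyC R) G f.

End Defs.

(* Main.v *)
Require Import Defs.
From HB Require Import structures.
From mathcomp Require Import all_boot all_order all_algebra.
From mathcomp Require Import reals.
From mathcomp Require Import mpoly.
Import Order.TTheory GRing.Theory Num.Theory.
Local Open Scope ring_scope.
From mathcomp Require Import ring lra zify.

Section Aux.
Variable R : realType.

Definition nnp (p : {poly R}) := forall k, 0 <= p`_k.

Lemma nnpM p q : nnp p -> nnp q -> nnp (p * q).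
Proof.
move=> hp hq k; rewrite coefM; apply: sumr_ge0 => j _; exact: mulr_ge0.
Qed.

Lemma nnp1 : nnp 1.
Proof. by move=> k; rewrite coef1; case: (k == 0)%N. Qed.

Lemma nnp_prod c (G : 'I_c -> {poly R}) (m : 'X_{1..c}) :
  (forall i, nnp (G i)) -> nnp (\prod_(i < c) G i ^+ m i).
Proof.
move=> hG; apply: (big_ind nnp) => //; first exact: nnp1.
- by move=> p q; apply: nnpM.
- move=> i _; elim: (m i) => [|k IH]; first by rewrite expr0; exact: nnp1.
  by rewrite exprS; apply: nnpM.
Qed.

Lemma horner_mmap c (f : {mpoly R[c]}) G z :
  (mpoly_at_polys f G).[z] = f.@[fun i => (G i).[z]].
Proof.
rewrite /mpoly_at_polys /mmap mevalE horner_sum; apply: eq_bigr => m _.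
rewrite hornerCM /mmap1 horner_prod; congr (_ * _); apply: eq_bigr => i _.
by rewrite horner_exp.
Qed.

Lemma coef_mmap_ge c (f : {mpoly R[c]}) G m n :
  (forall m, 0 <= f@_m) -> (forall i, nnp (G i)) ->
  f@_m * (\prod_(i < c) G i ^+ m i)`_n <= (mpoly_at_polys f G)`_n.
Proof.
move=> hf hG; rewrite /mpoly_at_polys /mmap coef_sum.
have hterm : forall m', 0 <= ((f@_m')%:P * mmap1 G m')`_n.
  by move=> m'; rewrite coefCM; apply: mulr_ge0 => //; apply: nnp_prod.
case: (boolP (m \in msupp f)) => hm.
  rewrite (bigD1_seq m) //= ?msupp_uniq // coefCM /mmap1.
  by rewrite lerDl; apply: sumr_ge0 => m' _.
rewrite (memN_msupp_eq0 hm) mul0r; exact: sumr_ge0.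
Qed.

Lemma meval_ge0 c (f : {mpoly R[c]}) (u : 'I_c -> R) :
  (forall m, 0 <= f@_m) -> (forall i, 0 <= u i) -> 0 <= f.@[u].
Proof.
move=> hf hu; rewrite mevalE; apply: sumr_ge0 => m _; apply: mulr_ge0 => //.
by apply: prodr_ge0 => i _; apply: exprn_ge0.
Qed.

Lemma meval_le c (f : {mpoly R[c]}) (u : 'I_c -> R) t :
  (forall m, 0 <= f@_m) -> (forall i, 0 <= u i <= t) ->
  f.@[u] <= \sum_(m <- msupp f) f@_m * t ^+ (mdeg m).
Proof.
move=> hf hu; rewrite mevalE; apply: ler_sum => m _; apply: ler_wpM2l => //.
rewrite mdegE -prodrXr; apply: ler_prod => i _.
case/andP: (hu i) => h0 h1; rewrite exprn_ge0 //=; by rewrite lerXn2r // ?nnegrE // (le_trans h0 h1).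
Qed.

Lemma meval_quad c (f : {mpoly R[c]}) (u : 'I_c -> R) t C :
  (forall m, 0 <= f@_m) -> (forall m, (mdeg m < 2)%N -> f@_m = 0) ->
  0 < C -> f.@[fun _ => C] = C -> 0 <= t <= C -> (forall i, 0 <= u i <= t) ->
  f.@[u] * C <= t ^+ 2.
Proof.
move=> hf hq hC hfix /andP[t0 tC] hu.
have hCC : f.@[fun _ => C] = \sum_(m <- msupp f) f@_m * C ^+ (mdeg m).
  rewrite mevalE; apply: eq_bigr => m _; congr (_ * _).
  by rewrite mdegE -prodrXr.
rewrite -(@ler_pM2r _ C) //.
apply: (le_trans (y := (\sum_(m <- msupp f) f@_m * t ^+ (mdeg m)) * C * C)).
  by rewrite ler_pM2r // ler_pM2r // meval_le.
have -> : t ^+ 2 * C = \sum_(m <- msupp f) t ^+ 2 * (f@_m * C ^+ (mdeg m)).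
  by rewrite -mulr_sumr -hCC hfix.
rewrite -mulrA mulr_suml; apply: ler_sum => m _.
case: (ltnP (mdeg m) 2) => hd; first by rewrite hq // !mul0r mulr0.
have -> : mdeg m = ((mdeg m - 2) + 2)%N by rewrite subnK.
rewrite !exprD.
set k := (mdeg m - 2)%N.
have h1 : t ^+ k <= C ^+ k by rewrite lerXn2r // ?nnegrE // ltW.
have h2 : 0 <= t ^+ k by apply: exprn_ge0.
have h3 : 0 <= f@_m := hf m.
have h4 : 0 <= t ^+ 2 by apply: exprn_ge0.
rewrite expr2 [C ^+ 2]expr2.
have -> : f@_m * (t ^+ k * (t * t)) * (C * C) = (f@_m * (t * t) * (C * C)) * t ^+ k by ring.
have -> : t * t * (f@_m * (C ^+ k * (C * C))) = (f@_m * (t * t) * (C * C)) * C ^+ k by ring.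
apply: ler_wpM2l => //; apply: mulr_ge0; [apply: mulr_ge0 => //; exact: mulr_ge0|exact: mulr_ge0 (ltW hC) (ltW hC)].
Qed.


Lemma bernoulli (d : R) n : 0 <= d <= 1 -> 1 - n%:R * d <= (1 - d) ^+ n.
Proof.
move=> /andP[d0 d1]; elim: n => [|n IH]; first by rewrite mul0r subr0 expr0.
rewrite exprS.
have h1 : 0 <= 1 - d by lra.
have h2 : (1 - d) * (1 - n%:R * d) <= (1 - d) * (1 - d) ^+ n by rewrite ler_wpM2l.
have h3 : 0 <= n%:R * d * d by apply: mulr_ge0 => //; apply: mulr_ge0.
rewrite -natr1; nra.
Qed.

Lemma geom_id (s : R) M : (1 - s) * \sum_(h < M) s ^+ h = 1 - s ^+ M.
Proof.
elim: M => [|M IH]; first by rewrite big_ord0 expr0 mulr0 subrr.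
rewrite big_ord_recr /= mulrDr IH exprS; ring.
Qed.

Lemma geom_le (s : R) M : 0 <= s < 1 -> \sum_(h < M) s ^+ h <= (1 - s)^-1.
Proof.
move=> /andP[s0 s1]; have hp : 0 < 1 - s by lra.
rewrite -(@ler_pM2l _ (1 - s)) // geom_id mulfV ?gt_eqF //.
by rewrite lerBlDr lerDl exprn_ge0.
Qed.

Lemma decay (x : nat -> R) C t0 c H0 :
  (0 < c)%N -> 0 < C -> 0 <= t0 -> t0 < C ->
  (forall h, 0 <= x h) ->
  (forall h, (H0 + c <= h)%N -> forall t, 0 <= t <= C ->
     (forall j : 'I_c, x (h - j.+1)%N <= t) -> x h * C <= t ^+ 2) ->
  (forall h, (H0 <= h < H0 + c)%N -> x h <= t0) ->
  (forall h, (H0 <= h)%N -> x h <= t0) /\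
  exists B, forall M, \sum_(h < M) x h <= B.
Proof.
move=> c0 C0 t00 t0C x0 hQ hW.
have P1 : forall h, (H0 <= h)%N -> x h <= t0.
  elim/ltn_ind => h IH hh.
  case: (ltnP h (H0 + c)) => hc; first by apply: hW; rewrite hh hc.
  have := hQ h hc t0; rewrite t00 (ltW t0C) => /(_ isT).
  have hw : forall j : 'I_c, x (h - j.+1)%N <= t0.
    move=> j; apply: IH; have := ltn_ord j; move: hc c0; clear; lia.
  move=> /(_ hw) hle.
  rewrite -(@ler_pM2r _ C) //; apply: (le_trans hle).
  by rewrite expr2 ler_wpM2l // ltW.
split => //.
set d := (C - t0) / (2 * C * c%:R).
have cpos : 0 < c%:R :> R by rewrite ltr0n.
have hd0 : 0 < d by rewrite /d divr_gt0 // ?subr_gt0 // !mulr_gt0.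
have hcd : c%:R * d = (C - t0) / (2 * C).
  rewrite /d; field; rewrite ?mulf_neq0 ?gt_eqF // ?pnatr_eq0; lia.
have hd1 : d <= 1.
  have : (C - t0) / (2 * C) <= 1.
    rewrite ler_pdivrMr ?mulr_gt0 //; lra.
  rewrite -hcd => h; apply: le_trans h.
  have h1c : (1 : R) <= c%:R by rewrite ler1n.
  nra.
set sg := 1 - d.
have sg0 : 0 < sg.
  have : (C - t0) / (2 * C) < 1 by rewrite ltr_pdivrMr ?mulr_gt0 //; lra.
  rewrite -hcd /sg => h.
  have : d <= c%:R * d.
    have h1c : (1 : R) <= c%:R by rewrite ler1n.
    nra.
  lra.
have sg1 : sg < 1 by rewrite /sg; lra.
have hsc : t0 <= C * sg ^+ c.
  have hb := bernoulli d c; rewrite (ltW hd0) hd1 in hb.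
  have hb' := hb isT; rewrite hcd in hb'.
  have : C * (1 - (C - t0) / (2 * C)) <= C * sg ^+ c by rewrite ler_wpM2l // ltW.
  have -> : C * (1 - (C - t0) / (2 * C)) = (C + t0) / 2.
    field; rewrite gt_eqF //.
  lra.
set K := t0 / sg ^+ (H0 + c).
have K0 : 0 <= K by rewrite /K divr_ge0 // exprn_ge0 // ltW.
have P2 : forall h, (H0 <= h)%N -> x h <= K * sg ^+ h.
  elim/ltn_ind => h IH hh.
  case: (ltnP h (H0 + c)) => hc.
    apply: (le_trans (P1 h hh)).
    have e : t0 = K * sg ^+ (H0 + c) by rewrite /K divfK // expf_neq0 // gt_eqF.
    rewrite {1}e ler_wpM2l //.
    by apply: ler_wiXn2l; [exact: ltW|exact: ltW|exact: ltnW].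
  set t := Num.min t0 (K * sg ^+ (h - c)).
  have ht0 : 0 <= t by rewrite /t le_min t00 mulr_ge0 // exprn_ge0 // ltW.
  have htC : t <= C by rewrite /t ge_min (ltW t0C).
  have hw : forall j : 'I_c, x (h - j.+1)%N <= t.
    move=> j; have hj := ltn_ord j.
    have n1 : (H0 <= h - j.+1)%N by move: hj hc; clear; lia.
    have n2 : (h - j.+1 < h)%N by move: hj hc c0; clear; lia.
    have n3 : (h - c <= h - j.+1)%N by move: hj; clear; lia.
    rewrite /t le_min P1 //=.
    apply: (le_trans (IH _ n2 n1)).
    rewrite ler_wpM2l //; apply: ler_wiXn2l; [exact: ltW|exact: ltW|exact: n3].
  have := hQ h hc t; rewrite ht0 htC => /(_ isT hw) hle.
  have htt : t ^+ 2 <= (K * sg ^+ (h - c)) * t0.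
    rewrite expr2; apply: ler_pM => //; [by rewrite /t ge_min lexx orbT|by rewrite /t ge_min lexx].
  have hK1 : 0 <= K * sg ^+ (h - c) by rewrite mulr_ge0 // exprn_ge0 // ltW.
  have : (K * sg ^+ (h - c)) * t0 <= (K * sg ^+ (h - c)) * (C * sg ^+ c).
    by rewrite ler_wpM2l.
  have -> : K * sg ^+ (h - c) * (C * sg ^+ c) = K * sg ^+ h * C.
    have -> : sg ^+ h = sg ^+ (h - c) * sg ^+ c.
      by rewrite -exprD subnK // (leq_trans _ hc) // leq_addl.
    ring.
  move=> h3; rewrite -(@ler_pM2r _ C) //; exact: le_trans hle (le_trans htt h3).
set S := \sum_(i < H0) x i / sg ^+ i.
have S0 : 0 <= S by apply: sumr_ge0 => i _; rewrite divr_ge0 // exprn_ge0 // ltW.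
have P3 : forall h, x h <= (K + S) * sg ^+ h.
  move=> h; case: (ltnP h H0) => hh.
    have -> : x h = (x h / sg ^+ h) * sg ^+ h by rewrite divfK // expf_neq0 // gt_eqF.
    apply: ler_wpM2r; first by rewrite exprn_ge0 // ltW.
    have hS : x h / sg ^+ h <= S.
      rewrite /S (bigD1 (Ordinal hh)) //= lerDl; apply: sumr_ge0 => i _.
      by rewrite divr_ge0 // exprn_ge0 // ltW.
    lra.
  apply: (le_trans (P2 h hh)); apply: ler_wpM2r; first by rewrite exprn_ge0 // ltW.
  lra.
exists ((K + S) * (1 - sg)^-1) => M.
have h1 : \sum_(h < M) x h <= \sum_(h < M) (K + S) * sg ^+ h.
  by apply: ler_sum => i _; exact: P3.
apply: (le_trans h1).
rewrite -mulr_sumr ler_wpM2l ?addr_ge0 //; apply: geom_le; rewrite sg1 ltW //.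
Qed.


Lemma horner_ge0 (p : {poly R}) z : nnp p -> 0 <= z -> 0 <= p.[z].
Proof.
move=> hp hz; rewrite horner_coef; apply: sumr_ge0 => i _.
by apply: mulr_ge0 => //; apply: exprn_ge0.
Qed.

Lemma horner_lt (p : {poly R}) z w : nnp p -> (1 < size p)%N -> 0 <= z -> z < w ->
  p.[z] < p.[w].
Proof.
move=> hp hs hz hzw; rewrite !horner_coef.
have hi : ((size p).-1 < size p)%N by rewrite prednK // ltnW.
rewrite (bigD1 (Ordinal hi)) //= [X in _ < X](bigD1 (Ordinal hi)) //=.
apply: ltr_leD.
  have hl : 0 < p`_(size p).-1.
    rewrite lt_def hp andbT -lead_coefE lead_coef_eq0 -size_poly_eq0.
    by rewrite -lt0n (ltn_trans _ hs).
  rewrite ltr_pM2l // ltrXn2r //; by rewrite -lt0n -ltnS prednK // ltnW.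
apply: ler_sum => i _; apply: ler_wpM2l => //.
by rewrite lerXn2r // ?nnegrE // ltW // (le_lt_trans hz hzw).
Qed.

Lemma horner_le (p : {poly R}) z w : nnp p -> (1 < size p)%N -> 0 <= z -> z <= w ->
  p.[z] <= p.[w].
Proof.
move=> hp hs hz; rewrite le_eqVlt => /orP[/eqP -> //|h].
exact/ltW/horner_lt.
Qed.

Lemma coef_le_horner (p : {poly R}) z n : nnp p -> 0 <= z -> p`_n * z ^+ n <= p.[z].
Proof.
move=> hp hz; case: (ltnP n (size p)) => hn.
  rewrite horner_coef (bigD1 (Ordinal hn)) //= lerDl; apply: sumr_ge0 => i _.
  by apply: mulr_ge0 => //; apply: exprn_ge0.
by rewrite nth_default // mul0r; apply: horner_ge0.
Qed.

Lemma bern2 (y : R) n : 0 <= y -> 1 + n%:R * y <= (1 + y) ^+ n.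
Proof.
move=> y0; elim: n => [|n IH]; first by rewrite mul0r addr0 expr0.
rewrite exprS.
have h1 : 0 <= 1 + y by lra.
have h2 : (1 + y) * (1 + n%:R * y) <= (1 + y) * (1 + y) ^+ n by rewrite ler_wpM2l.
have h3 : 0 <= n%:R * y * y by apply: mulr_ge0 => //; apply: mulr_ge0.
rewrite -natr1; nra.
Qed.

Lemma geom_small (r B e : R) : 0 < r -> r < 1 -> 0 <= B -> 0 < e ->
  exists N, forall n, (N <= n)%N -> B * r ^+ n <= e.
Proof.
move=> r0 r1 B0 e0.
set y := r^-1 - 1.
have y0 : 0 < y by rewrite /y subr_gt0 invf_gt1.
have hB : 0 <= B / (e * y) by rewrite divr_ge0 // ltW // mulr_gt0.
exists (Num.Def.archi_bound (B / (e * y))) => n hn.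
have hN := archi_boundP hB.
have hn' : B / (e * y) <= n%:R.
  apply: (le_trans (ltW hN)); by rewrite ler_nat.
have hb := bern2 y n (ltW y0).
have e1 : 1 + y = r^-1 by rewrite /y; ring.
rewrite e1 exprVn in hb.
have hrn : 0 < r ^+ n by apply: exprn_gt0.
have hBe : B <= e * (n%:R * y).
  move: hn'; rewrite ler_pdivrMr ?mulr_gt0 // => h.
  have -> : e * (n%:R * y) = n%:R * (e * y) by ring.
  exact: h.
have : B <= e * (r ^+ n)^-1.
  apply: (le_trans hBe); rewrite ler_wpM2l ?ltW //; lra.
rewrite -ler_pdivlMr // => h; apply: (le_trans _ h) => //.
Qed.

Lemma exists_lb (al : nat -> R) n : (forall j, 0 < al j) ->
  exists z, 0 < z /\ forall j, (j < n)%N -> z < al j.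
Proof.
move=> hal; elim: n => [|n [z [z0 hz]]]; first by exists 1.
exists (Num.min z (al n / 2)); split.
  by rewrite lt_min z0 divr_gt0.
move=> j; rewrite ltnS leq_eqVlt => /orP[/eqP ->|hj].
  rewrite gt_min; apply/orP; right; have := hal n; lra.
by rewrite gt_min hz.
Qed.

Lemma exists_ub (v : nat -> R) (B : R) H n : 0 < B ->
  (forall j, (H <= j < H + n)%N -> v j < B) ->
  exists t, 0 <= t /\ t < B /\ forall j, (H <= j < H + n)%N -> v j <= t.
Proof.
move=> B0; elim: n => [|n IH] hv.
  by exists 0; split => //; split => // j; rewrite addn0 => /andP[h1 h2]; lia.
have [t [t0 [tB ht]]] : exists t, 0 <= t /\ t < B /\ forall j, (H <= j < H + n)%N -> v j <= t.
  apply: IH => j /andP[h1 h2]; apply: hv; rewrite h1 /=; lia.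
exists (Num.max t (v (H + n))); split; first by rewrite le_max t0.
split; first by rewrite gt_max tB hv //= leq_addr /= addnS ltnS leqnn.
move=> j /andP[h1 h2]; case: (ltnP j (H + n)) => hj.
  by rewrite le_max ht // h1.
have -> : j = (H + n)%N by lia.
by rewrite le_max lexx orbT.
Qed.

End Aux.
Arguments nnp {R}.
Arguments nnpM {R}.
Arguments nnp1 {R}.
Arguments nnp_prod {R}.
Arguments horner_mmap {R}.
Arguments coef_mmap_ge {R}.
Arguments meval_ge0 {R}.
Arguments meval_le {R}.
Arguments meval_quad {R}.
Arguments bernoulli {R}.
Arguments geom_id {R}.
Arguments geom_le {R}.
Arguments decay {R}.
Arguments horner_ge0 {R}.
Arguments horner_lt {R}.
Arguments horner_le {R}.
Arguments coef_le_horner {R}.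
Arguments bern2 {R}.
Arguments geom_small {R}.
Arguments exists_lb {R}.
Arguments exists_ub {R}.

Theorem theorem4 (R : realType) (c : nat) (f : {mpoly R[c]}) (C : R)
    (F : nat -> {poly R}) (alphas : nat -> R) (alpha : R) (a : nat -> R) :
  (1 <= c)%N ->
  (* f has non-negative coefficients, is recursive-dependent, and has the
     positive fixed point C *)
  (forall m, 0 <= f@_m) ->
  recursive_dependent f ->
  0 < C -> f.@[fun _ => C] = C ->
  (* F_h : generating functions of the finite subclasses F_h: non-constant
     polynomials whose coefficients are counts (natural numbers) *)
  (forall h n, exists k : nat, (F h)`_n = k%:R) ->
  (forall h, (1 < size (F h))%N) ->
  (* combinatorial class: finitely many objects of each size *)
  (forall n, exists N, forall h, (N <= h)%N -> (F h)`_n = 0) ->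
  (* recurrence *)
  (forall h, (c <= h)%N ->
     F h = mpoly_at_polys f (fun j : 'I_c => F (h - j.+1)%N)) ->
  (* alpha_h : the positive real solution of F_h(z) = C *)
  (forall h, 0 < alphas h /\ (F h).[alphas h] = C) ->
  (* alpha = lim alpha_h *)
  (forall e : R, 0 < e -> exists N, forall h, (N <= h)%N ->
     `|alphas h - alpha| < e) ->
  (* a_n = [z^n] sum_h F_h(z) *)
  (forall n, exists N, forall M, (N <= M)%N ->
     a n = \sum_(h < M) (F h)`_n) ->
  exists theta : nat -> R,
    (forall n, a n = alpha ^- n * theta n) /\
    (forall kappa : R, 1 < kappa -> forall e : R, 0 < e ->
       exists N, forall n, (N <= n)%N -> `|theta n| <= e * kappa ^+ n).
Proof.
move=> hc1 hf _ hC hfix hnat hsize hfin hrec halph hlim ha.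
have nnF : forall h, nnp (F h).
  by move=> h k; have [k' ->] := hnat h k; apply: ler0n.
have hcoef : forall h m n, (c <= h)%N ->
    f@_m * (\prod_(i < c) F (h - i.+1)%N ^+ m i)`_n <= (F h)`_n.
  move=> h m n hh; rewrite [F h]hrec //; apply: coef_mmap_ge => // i; exact: nnF.
have hq : forall m, (mdeg m < 2)%N -> f@_m = 0.
  move=> m hm.
  have hfm := hf m.
  apply/eqP; rewrite eq_le hfm andbT; rewrite leNgt; apply/negP => hpos.
  have : (mdeg m == 0)%N || (mdeg m == 1)%N by case: (mdeg m) hm => [|[|]].
  case/orP => hd.
  - move: hd; rewrite mdeg_eq0 => /eqP hm0; subst m.
    have [N hN] := hfin 0%N.
    have := hcoef (N + c)%N 0%MM 0%N (leq_addl _ _).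
    rewrite hN ?leq_addr // big1 ?coef1 ?mulr1 => [h0|i _]; last by rewrite mnm0E expr0.
    by move: hpos; rewrite ltNge h0.
  - move/mdeg1P: hd => [i /eqP hmi]; subst m.
    have hy : forall n, (F c.-1)`_n = 0.
      move=> n; have [N hN] := hfin n.
      have Q : forall d h, (N - d <= h)%N -> (c.-1 <= h)%N -> (F h)`_n = 0.
        elim=> [|d IH] h hh hch; first by apply: hN; rewrite subn0 in hh.
        case: (leqP (N - d) h) => hh2; first exact: IH.
        have hi := ltn_ord i.
        have n1 : (c <= h + i.+1)%N by move: hch hc1; clear; lia.
        have e1 := hcoef (h + i.+1)%N U_(i)%MM n n1.
        rewrite -/(mmap1 _ _) mmap1U in e1.
        rewrite (_ : (h + i.+1 - i.+1)%N = h) in e1; last by clear; lia.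
        rewrite (IH (h + i.+1)%N) in e1; [|move: hh hh2; clear; lia|move: hch; clear; lia].
        apply/eqP; rewrite eq_le nnF andbT.
        by rewrite -(@ler_pM2l _ (f@_U_(i))) // mulr0.
      by apply: (Q N); [rewrite subnn|].
    have : F c.-1 = 0 by apply/polyP => n; rewrite hy coef0.
    by move=> h0; have := hsize c.-1; rewrite h0 size_poly0.
have hval : forall z h, (c <= h)%N ->
    (F h).[z] = f.@[fun j : 'I_c => (F (h - j.+1)%N).[z]].
  by move=> z h hh; rewrite [F h]hrec // horner_mmap.
have hQ : forall z H0, 0 <= z -> forall h, (H0 + c <= h)%N -> forall t, 0 <= t <= C ->
    (forall j : 'I_c, (F (h - j.+1)%N).[z] <= t) -> (F h).[z] * C <= t ^+ 2.
  move=> z H0 z0 h hh t ht hw; rewrite hval; last by move: hh; clear; lia.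
  apply: meval_quad => // j; rewrite hw andbT; apply: horner_ge0 => //.
have Fx0 : forall z h, 0 <= z -> 0 <= (F h).[z] by move=> z h z0; apply: horner_ge0.
have apos : 0 < alpha.
  have [z1 [z10 hz1]] := exists_lb alphas c (fun j => (halph j).1).
  have hwin : forall j, (0 <= j < 0 + c)%N -> (F j).[z1] < C.
    move=> j /andP[_ hj]; rewrite -(halph j).2; apply: horner_lt => //; [exact: ltW|exact: hz1].
  have [t0 [t00 [t0C ht0]]] := exists_ub (fun j => (F j).[z1]) C 0%N c hC hwin.
  have [P1 _] := decay (fun h => (F h).[z1]) C t0 c 0%N hc1 hC t00 t0C
     (fun h => Fx0 z1 h (ltW z10)) (hQ z1 0%N (ltW z10)) ht0.
  have hgt : forall h, z1 < alphas h.
    move=> h; rewrite ltNge; apply/negP => hle.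
    have := horner_le _ _ _ (nnF h) (hsize h) (ltW (halph h).1) hle.
    rewrite (halph h).2 => hCz; have := P1 h (leq0n _); lra.
  rewrite ltNge; apply/negP => hal.
  have [N hN] := hlim (z1 - alpha) ltac:(lra).
  have := hN N (leqnn _); have := hgt N.
  move=> h1 h2; have := ler_norm (alphas N - alpha); lra.
have a0 : forall n, 0 <= a n.
  move=> n; have [N hN] := ha n; rewrite (hN N) //; apply: sumr_ge0 => i _; exact: nnF.
exists (fun n => alpha ^+ n * a n); split.
  move=> n; rewrite mulKf // expf_neq0 // gt_eqF //.
move=> kappa hk e he.
set q := 2 * kappa / (kappa + 1).
have q1 : 1 < q by rewrite /q ltr_pdivlMr; lra.
have q0 : 0 < q by lra.
set z := alpha / q.
have z0 : 0 < z by rewrite /z divr_gt0.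
have za : z < alpha by rewrite /z ltr_pdivrMr //; nra.
have [N1 hN1] := hlim (alpha - z) ltac:(lra).
have hwin : forall j, (N1 + c <= j < N1 + c + c)%N -> (F j).[z] < C.
  move=> j /andP[hj _]; rewrite -(halph j).2; apply: horner_lt => //; first exact: ltW.
  have hjN : (N1 <= j)%N by move: hj; clear; lia.
  have := hN1 j hjN; have := ler_norm (alpha - alphas j).
  rewrite distrC; lra.
have [t0 [t00 [t0C ht0]]] := exists_ub (fun j => (F j).[z]) C (N1 + c)%N c hC hwin.
have [_ [B hB]] := decay (fun h => (F h).[z]) C t0 c (N1 + c)%N hc1 hC t00 t0C
     (fun h => Fx0 z h (ltW z0)) (hQ z (N1 + c)%N (ltW z0)) ht0.
have hazn : forall n, a n * z ^+ n <= B.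
  move=> n; have [N hN] := ha n; rewrite (hN N) // mulr_suml.
  apply: (le_trans _ (hB N)); apply: ler_sum => i _; apply: coef_le_horner => //; exact: ltW.
have B0 : 0 <= B by have := hazn 0%N; have := a0 0%N; rewrite expr0 mulr1; lra.
set r := q / kappa.
have r0 : 0 < r by rewrite /r divr_gt0 //; lra.
have r1 : r < 1 by rewrite /r ltr_pdivrMr /q; [rewrite ltr_pdivrMr; nra|lra].
have [N hN] := geom_small r B e r0 r1 B0 he.
exists N => n hn.
rewrite ger0_norm; last by rewrite mulr_ge0 // exprn_ge0 // ltW.
have ea : alpha = q * z by rewrite /z mulrC divfK // gt_eqF.
have ek : q = r * kappa by rewrite /r divfK // gt_eqF //; lra.
rewrite ea exprMn -mulrA.
have h1 : q ^+ n * (z ^+ n * a n) <= q ^+ n * B.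
  apply: ler_wpM2l; first by rewrite exprn_ge0 // ltW.
  rewrite mulrC; exact: hazn.
apply: (le_trans h1).
rewrite ek exprMn.
have -> : r ^+ n * kappa ^+ n * B = (B * r ^+ n) * kappa ^+ n by ring.
apply: ler_wpM2r; first by rewrite exprn_ge0 //; lra.
exact: hN.
Qed.
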